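(* In the standing setting below, for every set $\mathcal{O}'$ of popular sets with $|\mathcal{O}'|\le\kappa$ there is a single $b$-path-system $\mathcal{P}$ that witnesses the popularity of every $O\in\mathcal{O}'$ simultaneously.
   Context: Standing setting: $M,N$ are finitary matroids on a common ground set $E$; $I\in\mathcal{I}(M)\cap\mathcal{I}(N)$ is maximal among common independent sets; $\kappa:=r(N/I)$ is an uncountable regular cardinal and $r(M/I)<\kappa$. Fix a base $J_M$ of $M/I$ and a base $J_N$ of $N/I$, put $B_M:=I\cup J_M$, $B_N:=I\cup J_N$, $b:=(B_M,B_N)$. For a base $B$ of a matroid $M$, $D_M(B)$ is the digraph on $E$ with arc $ef$ iff $e\notin B$ and $f\in C_M(e,B)\setminus\{e\}$ ($C_M(e,B)$ the fundamental circuit); $D(b):=D_M(B_M)\cup D_N^{-1}(B_N)$ where $D^{-1}$ reverses all arcs. A $b$-path is a finite directed path $P$ in $D(b)$ whose initial vertex lies in $B_N\setminus B_M$ (single vertices allowed); $\mathsf{ter}(P)$ is its terminal vertex and $\mathsf{ter}(\mathcal{P})=\{\mathsf{ter}(P):P\in\mathcal{P}\}$. A $b$-path-system is a set of $\kappa$ pairwise disjoint $b$-paths. A $\Delta$-system is a family of sets any two of which intersect in the same set $K$ (the kernel); its petals are $C\setminus K$. A nonempty $K\subseteq E$ is popular if there exist a $b$-path-system $\mathcal{P}$ and a $\Delta$-system $\mathcal{D}$ of $\kappa$ many circuits of $M$ with kernel $K$ such that every petal of $\mathcal{D}$ is contained in $I\cup\mathsf{ter}(\mathcal{P})$; such $\mathcal{P}$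 witnesses the popularity of $K$. *)

(* Defs.v *)
From HB Require Import structures.
From mathcomp Require Import all_boot all_order.
From mathcomp Require Import boolp classical_sets cardinality.
Set Implicit Arguments. Unset Strict Implicit. Unset Printing Implicit Defensive.
Local Open Scope classical_set_scope.
Local Open Scope card_scope.

Definition card_lt (T U : Type) (A : set T) (B : set U) : Prop :=
  A #<= B /\ ~ (B #<= A).

Section Matroids.
Variable E : choiceType.

Definition maximal_set (P : set E -> Prop) (X : set E) : Prop :=
  P X /\ forall Y, P Y -> X `<=` Y -> Y = X.

(* Infinite matroid on ground set E (all of E) via independence axioms
   (I1),(I2),(I3),(IM) of Bruhn et al., plus finitarity. *)
Definition is_matroid (ind : set E -> Prop) : Prop :=
  [/\ ind set0,
      (forall X Y, ind Y -> X `<=` Y -> ind X),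
      (forall X B, ind X -> ~ maximal_set ind X -> maximal_set ind B ->
         exists x, B x /\ ~ X x /\ ind (x |` X))
    & (forall (J X : set E), ind J -> J `<=` X ->
         exists Y, maximal_set (fun Y => ind Y /\ J `<=` Y /\ Y `<=` X) Y)].

Definition is_finitary_matroid (ind : set E -> Prop) : Prop :=
  is_matroid ind /\
  (forall X, (forall F, finite_set F -> F `<=` X -> ind F) -> ind X).

Definition circuit (ind : set E -> Prop) (C : set E) : Prop :=
  ~ ind C /\ forall D, D `<=` C -> D <> C -> ind D.

Definition contr_base (ind : set E -> Prop) (I J : set E) : Prop :=
  maximal_set (fun J => J `&` I = set0 /\ ind (I `|` J)) J.

(* arc e f of D_M(B):  e \notin B and f \in C_M(e,B) \ {e}, where the
   fundamental circuit C_M(e,B) is the (unique) circuit contained in B + e *)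
Definition Darc (ind : set E -> Prop) (B : set E) (e f : E) : Prop :=
  ~ B e /\ f <> e /\ exists C, circuit ind C /\ C `<=` e |` B /\ C f.

Section Setting.
Variables (indM indN : set E -> Prop) (I BM BN JN : set E).
(* JN is the fixed base of N/I; kappa := r(N/I) = |JN| *)

Definition Db_arc (e f : E) : Prop := Darc indM BM e f \/ Darc indN BN f e.

Definition is_bpath (P : seq E) : Prop :=
  match P with
  | [::] => False
  | v0 :: _ => [/\ BN v0, ~ BM v0, uniq P &
       forall i, (i.+1 < size P)%N -> Db_arc (nth v0 P i) (nth v0 P i.+1)]
  end.

Definition ter_set (Ps : set (seq E)) : set E :=
  [set e | exists v0 rest, Ps (v0 :: rest) /\ e = last v0 rest].

Definition bpath_system (Ps : set (seq E)) : Prop :=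
  [/\ (forall P, Ps P -> is_bpath P),
      Ps #= JN &
      (forall P Q, Ps P -> Ps Q -> P <> Q -> forall x, x \in P -> x \notin Q)].

Definition delta_system (D : set (set E)) (K : set E) : Prop :=
  forall C C', D C -> D C' -> C <> C' -> C `&` C' = K.

Definition witnesses (Ps : set (seq E)) (K : set E) : Prop :=
  bpath_system Ps /\
  exists D : set (set E),
    [/\ D #= JN, (forall C, D C -> circuit indM C), delta_system D K &
        (forall C, D C -> C `\` K `<=` I `|` ter_set Ps)].

Definition popular (K : set E) : Prop :=
  K <> set0 /\ exists Ps, witnesses Ps K.

End Setting.

Definition regular_card (A : set E) : Prop :=
  forall F : set (set E), card_lt F A -> (forall X, F X -> card_lt X A) ->
    ~ (A `<=` \bigcup_(X in F) X).

End Matroids.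

(* Main.v *)
Require Import Defs.
From HB Require Import structures.
From mathcomp Require Import all_boot all_order.
From mathcomp Require Import boolp classical_sets functions cardinality wochoice.
Set Implicit Arguments. Unset Strict Implicit. Unset Printing Implicit Defensive.
Local Open Scope classical_set_scope.
Local Open Scope card_scope.

Lemma card_le_fun T U (A : set T) (B : set U) : A #<= B -> A !=set0 ->
  exists f : T -> U, {in A &, injective f} /\ (forall x, A x -> B (f x)).
Proof.
elim/Ppointed: U => U in B *.
  by rewrite (empty_eq0 B) => /card_le0P -> [x []].
move=> /pcard_leP[f] _; exists (fun x => f x); split; first exact: ('inj_f).
by move=> x Ax; apply: ('funS_f).
Qed.

Lemma card_le_of_fun T U (A : set T) (B : set U) (f : T -> U) :
  {in A &, injective f} -> (forall x, A x -> B (f x)) -> A #<= B.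
Proof.
move=> fi fAB; apply: (@card_le_trans _ _ _ (f @` A)).
  by have := inj_card_eq fi; rewrite card_eq_le => /andP[].
by apply: subset_card_le => _ [x Ax <-]; apply: fAB.
Qed.

Definition small (E : Type) (JN : set E) (T : Type) (X : set T) := ~ (JN #<= X).

Lemma uncount_inf (E : Type) (JN : set E) : ~ countable JN -> infinite_set JN.
Proof. by move=> nc fJ; apply: nc; apply: finite_set_countable. Qed.

Lemma fin_small (E : Type) (JN : set E) T (X : set T) :
  ~ countable JN -> finite_set X -> small JN X.
Proof.
move=> nc fX le; apply: (uncount_inf nc); exact: card_le_finite le fX.
Qed.

Lemma fin_le (E : Type) (JN : set E) T (X : set T) :
  ~ countable JN -> finite_set X -> X #<= JN.
Proof.
move=> nc /finite_setP[n Xn].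
have := uncount_inf nc; rewrite infiniteP => nJ.
rewrite (card_le_eql Xn); apply: card_le_trans nJ.
exact: card_leT.
Qed.

Lemma small_pull (E : Type) (JN : set E) T (f : E -> T) (Y : set T) :
  {in JN &, injective f} -> small JN Y -> small JN (JN `&` f @^-1` Y).
Proof.
move=> fi sY le; apply: sY; apply: (card_le_trans le).
apply: (@card_le_of_fun _ _ _ _ f) => [x y /set_mem[Jx _] /set_mem[Jy _]|x [_ //]].
by apply: fi; apply: mem_set.
Qed.

Lemma small_sub (E : Type) (JN : set E) T (X Y : set T) :
  X `<=` Y -> small JN Y -> small JN X.
Proof. by move=> XY sY le; apply: sY; apply: card_le_trans le (subset_card_le XY). Qed.

Lemma U2 (E : choiceType) (JN : set E) T (A B : set T) :
  ~ countable JN -> regular_card JN -> small JN A -> small JN B -> small JN (A `|` B).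
Proof.
move=> nc reg sA sB le.
have [x Jx] := infinite_setN0 (uncount_inf nc).
have [f [fi fJ]] := card_le_fun le (ex_intro _ x Jx).
pose F := [set JN `&` f @^-1` A; JN `&` f @^-1` B].
apply: (reg F).
- split; first exact: fin_le nc (finite_set2 _ _).
  exact: fin_small nc (finite_set2 _ _).
- move=> X [->|->]; (split; [by apply: subset_card_le => ? []|]).
    exact: small_pull fi sA.
  exact: small_pull fi sB.
- move=> y Jy; have [Ay|By] := fJ y Jy.
    by exists (JN `&` f @^-1` A); [left|].
  by exists (JN `&` f @^-1` B); [right|].
Qed.

Lemma IU (E : choiceType) (JN : set E) T (Idx : set E) (X : E -> set T) :
  ~ countable JN -> regular_card JN -> Idx `<=` JN -> small JN Idx ->
  (forall i, Idx i -> small JN (X i)) -> small JN (\bigcup_(i in Idx) X i).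
Proof.
move=> nc reg IJ sI sX le.
have [x Jx] := infinite_setN0 (uncount_inf nc).
have [f [fi fJ]] := card_le_fun le (ex_intro _ x Jx).
pose F := [set JN `&` f @^-1` X i | i in Idx].
apply: (reg F).
- split.
    apply: card_le_trans (card_image_le _ _) _; exact: subset_card_le.
  move=> le2; apply: sI; apply: card_le_trans le2 (card_image_le _ _).
- move=> _ [i Ii <-]; split; first by apply: subset_card_le => ? [].
  exact: small_pull fi (sX i Ii).
- move=> y Jy; have [i Ii Xy] := fJ y Jy.
  by exists (JN `&` f @^-1` X i); [exists i|].
Qed.
Section WO.
Variables (E : eqType) (R : rel E) (wo : well_order R).

Lemma wo_min (X : set E) : X !=set0 -> exists m, X m /\ forall y, X y -> R m y.
Proof.
move=> [x Xx].
have ne : nonempty [pred y | `[< X y >]] by rewrite /nonempty; exists x; rewrite inE.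
have [z [[zA lb] _]] := wo ne.
exists z; split; first by move: zA; rewrite inE.
by move=> y Xy; apply: lb; rewrite inE.
Qed.

Lemma wo_total x y : R x y \/ R y x.
Proof.
have [m [[->|->] lb]] := @wo_min [set x; y] (ex_intro _ x (or_introl erefl)).
  by left; apply: lb; right.
by right; apply: lb; left.
Qed.

Lemma wo_refl x : R x x.
Proof. by case: (wo_total x x). Qed.

Lemma wo_anti x y : R x y -> R y x -> x = y.
Proof.
move=> xy yx.
have ne : nonempty [pred z | (z == x) || (z == y)] by rewrite /nonempty; exists x; rewrite inE eqxx.
have [z [_ uniq]] := wo ne.
have mx : minimum_of R [pred z | (z == x) || (z == y)] x.
  split; first by rewrite inE eqxx.
  by move=> w; rewrite inE => /orP[/eqP->|/eqP->] //; apply: wo_refl.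
have my : minimum_of R [pred z | (z == x) || (z == y)] y.
  split; first by rewrite inE eqxx orbT.
  by move=> w; rewrite inE => /orP[/eqP->|/eqP->] //; apply: wo_refl.
by rewrite -(uniq _ mx) (uniq _ my).
Qed.

Lemma wo_trans x y z : R x y -> R y z -> R x z.
Proof.
move=> xy yz.
have [m [Xm lb]] := @wo_min [set w | w = x \/ w = y \/ w = z] (ex_intro _ x (or_introl erefl)).
case: Xm lb => [->|[->|->]] lb.
- by apply: lb; right; right.
- have -> : x = y by apply: wo_anti => //; apply: lb; left.
  by [].
- have e : y = z by apply: wo_anti => //; apply: lb; right; left.
  by rewrite -e.
Qed.

Definition wlt x y := R x y /\ x <> y.

Lemma wlt_wf : well_founded wlt.
Proof.
move=> x; apply: contrapT => nA.
have [m [nAm lb]] := @wo_min [set y | ~ Acc wlt y] (ex_intro _ x nA).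
apply: nAm; constructor => y [ym ny]; apply: contrapT => nAy.
by apply: ny; apply: wo_anti => //; apply: lb.
Qed.

Lemma wlt_trich x y : wlt x y \/ x = y \/ wlt y x.
Proof.
have [->|nxy] := pselect (x = y); first by right; left.
case: (wo_total x y) => h; [left|right; right]; split => //.
by move=> e; apply: nxy.
Qed.

Lemma wlt_trans x y z : wlt x y -> wlt y z -> wlt x z.
Proof.
move=> [xy nxy] [yz nyz]; split; first exact: wo_trans xy yz.
move=> e; subst z; apply: nxy; exact: wo_anti.
Qed.

Lemma wlt_irr x : ~ wlt x x.
Proof. by case. Qed.

Definition lexlt (p q : E * E) := wlt p.1 q.1 \/ (p.1 = q.1 /\ wlt p.2 q.2).

Lemma lexlt_wf : well_founded lexlt.
Proof.
move=> [a b]; move: b; elim: (wlt_wf a) => {}a _ IHa b.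
elim: (wlt_wf b) => {}b _ IHb.
constructor => -[c d] [/= ca|[/= -> db]].
  exact: IHa.
exact: IHb.
Qed.

Lemma lexlt_trich p q : p <> q -> lexlt p q \/ lexlt q p.
Proof.
case: p q => [a b] [c d] /= ne.
case: (wlt_trich a c) => [h|[e|h]]; [by left; left|subst c|by right; left].
case: (wlt_trich b d) => [h|[e|h]]; [by left; right|subst; by []|by right; right].
Qed.

End WO.

Lemma circuit_finite (E : choiceType) (ind : set E -> Prop) C :
  is_finitary_matroid ind -> circuit ind C -> finite_set C.
Proof.
move=> [_ fin] [nC min]; apply: contrapT => infC; apply: nC.
apply: fin => F fF FC; apply: min => // eFC; apply: infC; by rewrite -eFC.
Qed.

Lemma good_order (E : choiceType) (JN : set E) (R : rel E) :
  well_order R ->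
  exists S, [/\ S `<=` JN, JN #<= S &
    forall s, S s -> small JN [set y | S y /\ wlt R y s]].
Proof.
move=> wo.
pose X := [set x | JN x /\ JN #<= [set y | JN y /\ wlt R y x]].
have [[x Xx]|nX] := pselect (X !=set0).
  have [m [[Jm Xm] lb]] := wo_min wo (ex_intro _ x Xx).
  exists [set y | JN y /\ wlt R y m]; split => //; first by move=> y [].
  move=> s [Js sm] le; have Xs : X s.
    split => //; apply: (card_le_trans le); apply: subset_card_le => y [[Jy ym] ys].
    by split => //; exact: wlt_trans wo ys sm.
  have ms := lb s Xs; case: sm => sm nsm; apply: nsm.
  exact: (@wo_anti _ R wo s m sm ms).
exists JN; split => // s Js le; apply: nX; exists s; split => //.
Qed.

Unset Implicit Arguments.
Theorem mainTheorem13 (E : choiceType) (indM indN : set E -> Prop)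
  (I JM JN : set E) :
  is_finitary_matroid indM -> is_finitary_matroid indN ->
  maximal_set (fun X => indM X /\ indN X) I ->
  contr_base indM I JM -> contr_base indN I JN ->
  ~ countable JN -> regular_card JN -> card_lt JM JN ->
  forall O' : set (set E),
    (forall O, O' O -> popular indM indN I (I `|` JM) (I `|` JN) JN O) ->
    O' #<= JN ->
    exists Ps : set (seq E),
      bpath_system indM indN (I `|` JM) (I `|` JN) JN Ps /\
      forall O, O' O -> witnesses indM indN I (I `|` JM) (I `|` JN) JN Ps O.
Proof.
move=> finM finN _ _ [[JNI _] _] nc reg [_ sJM] O' popO' O'le.
set BM := I `|` JM; set BN := I `|` JN.
have [x0 Jx0] := infinite_setN0 (uncount_inf nc).
pose Wit O (PD : set (seq E) * set (set E)) := O' O ->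
   [/\ bpath_system indM indN BM BN JN PD.1, PD.2 #= JN,
       (forall C, PD.2 C -> circuit indM C), delta_system PD.2 O &
       (forall C, PD.2 C -> C `\` O `<=` I `|` ter_set PD.1)].
have [PD PDP] : sigT (fun PD : set E -> set (seq E) * set (set E) => forall O, Wit O (PD O)).
  apply: choice => O.
  have [OO|nO] := pselect (O' O); last by exists (set0, set0).
  have [_ [Ps [bs [D [D1 D2 D3 D4]]]]] := popO' O OO.
  by exists (Ps, D).
have [R wo] := well_ordering_principle E.
have [S [SJ JS Ssmall]] := good_order JN wo.
have Sne : S !=set0.
  apply: contrapT => /set0P/negP; rewrite negbK => /eqP S0.
  by move: JS; rewrite S0 => /card_le0P J0; move: Jx0; rewrite J0.
have [h [hi hS]] : exists h : set E -> E, {in O' &, injective h} /\ forall O, O' O -> S (h O).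
  have [[O1 O1O]|nO] := pselect (O' !=set0).
    have [h [hi hS]] := card_le_fun (card_le_trans O'le JS) (ex_intro _ O1 O1O).
    by exists h.
  by exists (fun=> x0); split => [a b /set_mem Oa|O Oa]; exfalso; apply: nO; [exists a|exists O].
have segS : forall s, S s -> small JN [set y | S y /\ R y s].
  move=> s Ss; apply: (@small_sub _ _ _ _ ([set y | S y /\ wlt R y s] `|` [set s])).
    move=> y [Sy ys]; have [->|nys] := pselect (y = s); first by right.
    by left; split.
  by apply: U2 => //; [exact: Ssmall|exact: fin_small nc (finite_set1 _)].
pose Opt := (set E * set (seq E) * E)%type.
pose usage (o : Opt) : set E := [set x | exists P, o.1.2 P /\ x \in P] `|` [set o.2].
pose valid (p : E * E) := [/\ S p.1, S p.2 & R p.2 p.1].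
pose good (p : E * E) (rec : forall q, lexlt R q p -> Opt) (o : Opt) : Prop :=
  [/\ finite_set o.1.2,
      (forall P, o.1.2 P -> is_bpath indM indN BM BN P) /\
        (forall P Q, o.1.2 P -> o.1.2 Q -> P <> Q -> forall x, x \in P -> x \notin Q),
      (JN o.2 /\ ~ JM o.2) /\ (forall P, o.1.2 P -> o.2 \notin P),
      (forall q (H : lexlt R q p), valid q -> forall x, usage o x -> ~ usage (rec q H) x) &
      (forall O, O' O -> h O = p.2 ->
        [/\ (PD O).2 o.1.1, o.1.2 `<=` (PD O).1, o.1.1 `\` O `<=` I `|` ter_set o.1.2 &
            forall q (H : lexlt R q p), valid q -> q.2 = p.2 -> (rec q H).1.1 <> o.1.1])].
pose dflt : Opt := (set0, set0, x0).
pose F (p : E * E) (rec : forall q, lexlt R q p -> Opt) : Opt :=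
  match pselect (exists o, good p rec o) with left H => sval (cid H) | right _ => dflt end.
pose f := Fix (lexlt_wf wo) (fun _ => Opt) F.
have fE : forall p, f p = F p (fun q _ => f q).
  move=> p; rewrite /f Fix_eq // => p' g1 g2 eq12.
  have -> // : g1 = g2.
  apply: functional_extensionality_dep => q; apply: functional_extensionality_dep => H.
  exact: eq12.
have ffin : forall q, finite_set (f q).1.2.
  move=> q; rewrite fE /F; case: pselect => H; last exact: finite_set0.
  by have [] := svalP (cid H).
have ufin : forall q, finite_set (usage (f q)).
  move=> q; rewrite finite_setU; split; last exact: finite_set1.
  apply: (@sub_finite_set _ _ (\bigcup_(P in (f q).1.2) [set` P])).
    by move=> x [P [BP xP]]; exists P.
  by apply: bigcup_finite => // P _; exact: finite_seq.
have fgood : forall p, valid p -> good p (fun q _ => f q) (f p).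
  move=> p vp.
  suff [o go] : exists o, good p (fun q _ => f q) o.
    rewrite [f p]fE /F; case: pselect => [H|]; first exact: svalP (cid H).
    by move=> nH; exfalso; apply: nH; exists o.
  case: p vp => t u [/= St Su ut].
  pose U := [set x | exists q, lexlt R q (t, u) /\ valid q /\ usage (f q) x].
  have sU : small JN U.
    apply: (@small_sub _ _ _ _ (\bigcup_(s in [set s | S s /\ R s t])
              \bigcup_(w in [set w | S w /\ R w s]) usage (f (s, w)))).
      move=> x [[s w] [lq [[/= Ss Sw ws] ux]]]; exists s.
        split => //; case: lq => [[/= st _]|[/= -> _]] //; exact: wo_refl.
      by exists w.
    apply: IU => //; [by move=> y [/SJ]|exact: segS|].
    move=> s [Ss _]; apply: IU => //; [by move=> y [/SJ]|exact: segS|].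
    by move=> w _; apply: fin_small.
  have filler : forall V : set E, finite_set V ->
      exists v, [/\ JN v, ~ JM v, ~ U v & ~ V v].
    move=> V fV; apply: contrapT => nv.
    have : small JN (JM `|` U `|` V).
      apply: U2 => //; last exact: fin_small.
      by apply: U2.
    apply; apply: subset_card_le => y Jy.
    apply: contrapT => ny; apply: nv; exists y; split => // => [?|?|?]; apply: ny.
    - by left; left.
    - by left; right.
    - by right.
  have [[O [OO hO]]|nreq] := pselect (exists O, O' O /\ h O = u); last first.
    have [v [Jv nJMv nUv _]] := filler set0 (finite_set0 _).
    exists (set0, set0, v); split => //=.
    - move=> q H vq x [[P [[]]]|/= ->] uqv; apply: nUv; by exists q.
    - by move=> O OO hO; exfalso; apply: nreq; exists O.
  have [[bpO cardPO disjPO] DOJ DOc DOd DOp] := PDP O OO.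
  set PO := (PD O).1 in bpO cardPO disjPO DOp *.
  set DO := (PD O).2 in DOJ DOc DOd DOp *.
  pose BC (C : set E) := [set P | PO P /\ exists v0 rest, P = v0 :: rest /\
     (C `\` O) (last v0 rest) /\ ~ I (last v0 rest)].
  pose g (x : E) : set E :=
    match pselect (exists C, DO C /\ exists P, BC C P /\ x \in P) with
    | left H => sval (cid H) | right _ => set0 end.
  pose Bl1 := [set C | DO C /\ exists P x, BC C P /\ x \in P /\ U x].
  pose Bl2 := (fun s => (f (s, u)).1.1) @` [set s | S s /\ R s t].
  have Bl1g : Bl1 `<=` g @` U.
    move=> C [DC [P [x [BP [xP Ux]]]]]; exists x => //.
    rewrite /g; case: pselect => [H|nH]; last first.
      by exfalso; apply: nH; exists C; split => //; exists P.
    have [DC' [P' [BP' xP']]] := svalP (cid H).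
    move: (sval (cid H)) DC' BP' => C' DC' BP'.
    have PP' : P = P'.
      apply: contrapT => nPP.
      by have := disjPO P P' BP.1 BP'.1 nPP x xP; rewrite xP'.
    subst P'.
    case: BP => _ [v0 [r [Pe [[Cl nOl] _]]]].
    case: BP' => _ [v0' [r' [Pe' [[Cl' _] _]]]].
    move: Pe'; rewrite Pe => -[ev er]; subst v0' r'.
    apply: contrapT => nCC; apply: nOl.
    by rewrite -(DOd C' C DC' DC nCC); split.
  have sBl : small JN (Bl1 `|` Bl2).
    apply: U2 => //.
      apply: (small_sub Bl1g) => le; apply: sU; exact: card_le_trans le (card_image_le _ _).
    move=> le; apply: (segS t St); exact: card_le_trans le (card_image_le _ _).
  have [C [DC nB1 nB2]] : exists C, [/\ DO C, ~ Bl1 C & ~ Bl2 C].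
    apply: contrapT => nC; apply: sBl.
    have : JN #<= DO by move: DOJ; rewrite card_eq_sym card_eq_le => /andP[].
    move=> /card_le_trans; apply; apply: subset_card_le => C DC.
    apply: contrapT => nC2; apply: nC; exists C; split => // => [b1|b2]; apply: nC2; [left|right] => //.
  have Cfin : finite_set C := circuit_finite finM (DOc C DC).
  pose B := BC C.
  have Bfin : finite_set B.
    apply: (card_le_finite _ Cfin).
    apply: (@card_le_of_fun _ _ _ _ (last x0)).
      move=> P Q /set_mem [POP [v0 [r [Pe _]]]] /set_mem [POQ [w0 [r' [Qe _]]]] eq.
      apply: contrapT => nPQ.
      have Pin : last x0 P \in P by rewrite Pe; exact: (@mem_last E v0 r).
      have Qin : last x0 Q \in Q by rewrite Qe; exact: (@mem_last E w0 r').
      by move: (disjPO P Q POP POQ nPQ _ Pin); rewrite eq Qin.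
    by move=> P [_ [v0 [r [Pe [[Cl _] _]]]]]; rewrite Pe.
  pose V := [set x | exists P, B P /\ x \in P].
  have Vfin : finite_set V.
    apply: (@sub_finite_set _ _ (\bigcup_(P in B) [set` P])).
      by move=> x [P [BP xP]]; exists P.
    by apply: bigcup_finite => // P _; exact: finite_seq.
  have [v [Jv nJMv nUv nVv]] := filler V Vfin.
  exists (C, B, v); split => /=.
  - exact: Bfin.
  - split; first by move=> P [POP _]; exact: bpO.
    by move=> P Q [POP _] [POQ _]; exact: disjPO.
  - split => // P BP; apply/negP => vP; apply: nVv; by exists P.
  - move=> q H vq x [[P [BP xP]]|/= ->] uq.
      by apply: nB1; split => //; exists P, x; split => //; split => //; exists q.
    by apply: nUv; exists q.
  - move=> O2 O2O hO2.
    have eO : O2 = O by apply: hi; [exact: mem_set|exact: mem_set|rewrite hO2 hO].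
    subst O2; split => //.
    + by move=> P [].
    + move=> e [Ce nOe]; have [Ie|[v0 [r [POP ee]]]] := DOp C DC e (conj Ce nOe).
        by left.
      have [Ie|nIe] := pselect (I e); first by left.
      right; exists v0, r; split => //; split => //; exists v0, r; split => //.
      by rewrite -ee.
    + case=> s w H vq /= wu eC; subst w; apply: nB2; exists s => //.
      case: vq => /= Ss _ _; split => //.
      by case: H => [[/= st _]|[/= -> _]] //; exact: wo_refl.
pose Ps := [set P | exists p, valid p /\ ((f p).1.2 P \/ P = [:: (f p).2])].
have inU : forall p P x, ((f p).1.2 P \/ P = [:: (f p).2]) -> x \in P -> usage (f p) x.
  move=> p P x [BP xP|-> ]; first by left; exists P.
  by rewrite inE => /eqP ->; right.
have bpPs : forall P, Ps P -> is_bpath indM indN BM BN P.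
  move=> P [p [vp [BP| ->]]].
    by have [_ [bp _] _ _ _] := fgood p vp; exact: bp.
  have [_ _ [[Jv nJMv] _] _ _] := fgood p vp.
  split => //; first by right.
  case=> [Iv|//]; have : (JN `&` I) (f p).2 by [].
  by rewrite JNI.
have disjPs : forall P Q, Ps P -> Ps Q -> P <> Q -> forall x, x \in P -> x \notin Q.
  move=> P Q [p [vp BP]] [p' [vp' BQ]] nPQ x xP; apply/negP => xQ.
  have [ep|nep] := pselect (p = p').
    subst p'; have [_ [_ dj] [_ vnP] _ _] := fgood p vp.
    case: BP => [BP|eP]; case: BQ => [BQ|eQ].
    - by move: (dj P Q BP BQ nPQ x xP); rewrite xQ.
    - rewrite eQ inE in xQ; move/eqP: xQ => ex; subst x.
      by move: (vnP P BP); rewrite xP.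
    - rewrite eP inE in xP; move/eqP: xP => ex; subst x.
      by move: (vnP Q BQ); rewrite xQ.
    - by apply: nPQ; rewrite eP eQ.
  case: (lexlt_trich wo nep) => lt.
    have [_ _ _ pr _] := fgood p' vp'.
    exact: (pr p lt vp x (inU _ _ _ BQ xQ) (inU _ _ _ BP xP)).
  have [_ _ _ pr _] := fgood p vp.
  exact: (pr p' lt vp' x (inU _ _ _ BP xP) (inU _ _ _ BQ xQ)).
have PsJ : Ps #<= JN.
  apply: (@card_le_of_fun _ _ _ _ (head x0)).
    move=> P Q /set_mem PP /set_mem PQ eh; apply: contrapT => nPQ.
    move: (bpPs P PP) (bpPs Q PQ) (disjPs P Q PP PQ nPQ) eh.
    case: P {PP nPQ} => [//|v0 r] _; case: Q {PQ} => [//|w0 r'] _ /= dj eh; subst w0.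
    by move: (dj v0); rewrite !inE eqxx /= => /(_ isT).
  move=> P PP; move: (bpPs P PP); case: P {PP} => [//|v0 r] [[Iv|Jv] nB _ _] //.
  by exfalso; apply: nB; left.
have JPs : JN #<= Ps.
  apply: (card_le_trans JS).
  apply: (@card_le_of_fun _ _ _ _ (fun t => [:: (f (t, t)).2])); last first.
    move=> t St; exists (t, t); split; last by right.
    by split => //=; exact: wo_refl.
  move=> t1 t2 /set_mem St1 /set_mem St2 [e12]; apply: contrapT => nt.
  have v1 : valid (t1, t1) by split => //=; exact: wo_refl.
  have v2 : valid (t2, t2) by split => //=; exact: wo_refl.
  have ne : (t1, t1) <> (t2, t2) by case.
  case: (lexlt_trich wo ne) => lt.
    have [_ _ _ pr _] := fgood _ v2.
    by apply: (pr _ lt v1 (f (t2, t2)).2); right => //; right.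
  have [_ _ _ pr _] := fgood _ v1.
  by apply: (pr _ lt v2 (f (t1, t1)).2); right => //; right.
have bsPs : bpath_system indM indN BM BN JN Ps.
  by split => //; rewrite card_eq_le PsJ JPs.
exists Ps; split => // O OO; split => //.
have [_ DOJ DOc DOd _] := PDP O OO.
pose D' := [set C | exists t, [/\ S t, R (h O) t & C = (f (t, h O)).1.1]].
have vO : forall t, S t -> R (h O) t -> valid (t, h O).
  by move=> t St ht; split => //; exact: hS.
have D'D : D' `<=` (PD O).2.
  move=> C [t [St ht ->]]; have [_ _ _ _ rq] := fgood _ (vO t St ht).
  by have [] := rq O OO erefl.
exists D'; split.
- rewrite card_eq_le; apply/andP; split.
    apply: card_le_trans (subset_card_le D'D) _.
    by move: DOJ; rewrite card_eq_le => /andP[].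
  have JT : JN #<= [set t | S t /\ R (h O) t].
    apply: contrapT => nT.
    have : small JN ([set y | S y /\ wlt R y (h O)] `|` [set t | S t /\ R (h O) t]).
      by apply: U2 => //; exact: Ssmall (hS O OO).
    apply; apply: (card_le_trans JS); apply: subset_card_le => y Sy.
    case: (wo_total wo y (h O)) => yh; last by right.
    have [->|nyh] := pselect (y = h O); first by right; split; [exact: hS|exact: (@wo_refl _ R wo)].
    by left.
  apply: (card_le_trans JT).
  apply: (@card_le_of_fun _ _ _ _ (fun t => (f (t, h O)).1.1)); last first.
    by move=> t [St ht]; exists t.
  move=> t1 t2 /set_mem [St1 h1] /set_mem [St2 h2] e; apply: contrapT => nt.
  case: (wlt_trich wo t1 t2) => [lt|[//|lt]].
    have [_ _ _ _ rq] := fgood _ (vO t2 St2 h2).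
    have [_ _ _ dq] := rq O OO erefl.
    by apply: (dq (t1, h O) (or_introl lt) (vO t1 St1 h1) erefl).
  have [_ _ _ _ rq] := fgood _ (vO t1 St1 h1).
  have [_ _ _ dq] := rq O OO erefl.
  by apply: (dq (t2, h O) (or_introl lt) (vO t2 St2 h2) erefl).
- by move=> C /D'D; exact: DOc.
- by move=> C C' /D'D DC /D'D DC'; exact: DOd.
- move=> C [t [St ht ->]] e Ce.
  have [_ _ _ _ rq] := fgood _ (vO t St ht).
  have [_ _ pet _] := rq O OO erefl.
  case: (pet e Ce) => [Ie|[v0 [r [Br ee]]]]; first by left.
  right; exists v0, r; split => //; exists (t, h O); split; [exact: vO|by left].
Qed.
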